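(* Let $\mathcal{I}$ be a set of $n$ intervals (circular arcs) on the unit circle, and let $G=(\mathcal{I},E)$ be the associated intersection graph. Then $|E|=O(\alpha\,\omega^2)$, where $\omega$ is the maximum depth of $\mathcal{I}$ and $\alpha$ is the size of the largest independent set in $G$. Furthermore, this upper bound on $|E|$ is tight (there are such families with $\Omega(\alpha\,\omega^2)$ edges).
   Context: The depth of a point of the circle is the number of intervals of $\mathcal{I}$ containing it; the maximum depth of $\mathcal{I}$ is the maximum depth over all points of the circle. Two intervals are adjacent in the intersection graph if they intersect. *)

(* Defs.v *)
From mathcomp Require Import all_boot all_order all_algebra.
From mathcomp Require Import boolp reals.
Set Implicit Arguments. Unset Strict Implicit. Unset Printing Implicit Defensive.
Import Order.TTheory GRing.Theory Num.Theory.
Local Open Scope ring_scope.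

(* The unit circle is identified with R/Z (angle / 2pi); its points are
   represented by reals x with 0 <= x < 1. *)
Definition circle_pt (R : realType) (x : R) : Prop := 0 <= x < 1.

(* A (closed) circular arc: it starts at angle [astart] and goes
   counterclockwise over length [alen]. *)
Record circ_arc (R : realType) := Arc { astart : R; alen : R }.

Definition wf_arc (R : realType) (A : circ_arc R) : Prop :=
  0 <= astart A < 1 /\ 0 < alen A < 1.

Definition in_arc (R : realType) (A : circ_arc R) (x : R) : Prop :=
  exists k : int, astart A <= x + k%:~R <= astart A + alen A.

Definition arcs_intersect (R : realType) (A B : circ_arc R) : Prop :=
  exists x, circle_pt x /\ in_arc A x /\ in_arc B x.

Definition depth (R : realType) (n : nat) (I : 'I_n -> circ_arc R) (x : R) : nat :=
  #|[set i : 'I_n | `[< in_arc (I i) x >]]|.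

Definition is_max_depth (R : realType) (n : nat) (I : 'I_n -> circ_arc R) (w : nat)
  : Prop :=
  (exists x, circle_pt x /\ depth I x = w) /\
  (forall x, circle_pt x -> (depth I x <= w)%N).

Definition num_edges (R : realType) (n : nat) (I : 'I_n -> circ_arc R) : nat :=
  #|[set p : 'I_n * 'I_n | (p.1 < p.2)%N && `[< arcs_intersect (I p.1) (I p.2) >]]|.

Definition independent (R : realType) (n : nat) (I : 'I_n -> circ_arc R)
  (S : {set 'I_n}) : Prop :=
  forall i j, i \in S -> j \in S -> i != j -> ~ arcs_intersect (I i) (I j).

Definition independence_number (R : realType) (n : nat) (I : 'I_n -> circ_arc R)
  : nat :=
  \max_(S : {set 'I_n} | `[< independent I S >]) #|S|.

(* Main.v *)
Require Import Defs.
From mathcomp Require Import all_boot all_order all_algebra.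
From mathcomp Require Import boolp reals.
From mathcomp Require Import zify ring lra.
Set Implicit Arguments. Unset Strict Implicit. Unset Printing Implicit Defensive.
Import Order.TTheory GRing.Theory Num.Theory.
Local Open Scope ring_scope.

Lemma int_zero (R : realType) (k : int) (x s e : R) :
  0 <= x -> x < 1 -> 0 <= s -> e < 1 -> s <= x + k%:~R <= e -> k = 0.
Proof.
move=> x0 x1 s0 e1 /andP[h1 h2].
have a : (-1)%:~R < k%:~R :> R by rewrite intrN /=; lra.
have b : k%:~R < 1%:~R :> R by rewrite /=; lra.
rewrite ltr_int in a; rewrite ltr_int in b; lia.
Qed.

Lemma arcs_inter_start (R : realType) (A B : circ_arc R) :
  arcs_intersect A B -> in_arc B (astart A) \/ in_arc A (astart B).
Proof.
move=> [x [_ [[k /andP[h1 h2]] [m /andP[h3 h4]]]]].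
have [uv|vu] := lerP (x + k%:~R - astart A) (x + m%:~R - astart B).
  left; exists (m - k); rewrite intrB; apply/andP; split; lra.
right; exists (k - m); rewrite intrB; apply/andP; split; lra.
Qed.

Lemma arcs_inter_sym (R : realType) (A B : circ_arc R) :
  arcs_intersect A B -> arcs_intersect B A.
Proof. by move=> [x [h1 [h2 h3]]]; exists x. Qed.

Lemma card_pairs (T : finType) (P : T -> T -> bool) :
  #|[set p : T * T | P p.1 p.2]| = (\sum_i \sum_j (P i j : nat))%N.
Proof.
rewrite -sum1_card big_mkcond /= pair_bigA /=.
by apply: eq_bigr => -[i j] _; rewrite inE; case: (P i j).
Qed.

Lemma card_set_sum (T : finType) (P : T -> bool) :
  #|[set j | P j]| = (\sum_j (P j : nat))%N.
Proof.
rewrite -sum1_card big_mkcond /=.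
by apply: eq_bigr => j _; rewrite inE; case: (P j).
Qed.

Lemma lin (R : realType) (A : circ_arc R) :
  wf_arc A -> ~ in_arc A 0 -> 0 < astart A /\ astart A + alen A < 1.
Proof.
move=> [/andP[s0 s1] /andP[l0 l1]] nin; split.
  rewrite lt_def s0 andbT; apply/negP => /eqP s00; apply: nin.
  by exists 0; rewrite -s00 addr0 /=; apply/andP; split; lra.
rewrite ltNge; apply/negP => e1; apply: nin.
by exists 1; rewrite add0r /=; apply/andP; split; lra.
Qed.

Lemma lin_in (R : realType) (A : circ_arc R) (x : R) :
  0 <= astart A -> astart A + alen A < 1 -> 0 <= x -> x < 1 -> in_arc A x ->
  astart A <= x <= astart A + alen A.
Proof.
move=> s0 e1 x0 x1 [k hk].
by have k0 := int_zero x0 x1 s0 e1 hk; move: hk; rewrite k0 /= addr0.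
Qed.

Lemma greedy (R : realType) (n : nat) (I : 'I_n -> circ_arc R) (w : nat) :
  (forall i, wf_arc (I i)) -> (forall x, circle_pt x -> (depth I x <= w)%N) ->
  forall S : {set 'I_n}, (forall i, i \in S -> ~ in_arc (I i) 0) ->
  exists T : {set 'I_n}, [/\ T \subset S, independent I T & (#|S| <= w * #|T|)%N].
Proof.
move=> wf Hd S; have [m] := ubnP #|S|; elim: m S => // m IH S ltSm HS.
have [->|/set0Pn [i1 i1S]] := eqVneq S set0.
  exists set0; split; [exact: sub0set | | by rewrite cards0].
  by move=> i j; rewrite inE.
pose F := fun i => astart (I i) + alen (I i).
case: (@arg_minP _ R _ i1 (fun i => i \in S) F i1S) => i0 i0S Hmin.
have [s0p e0] := lin (wf i0) (HS _ i0S).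
pose N := [set j in S | `[< in_arc (I j) (F i0) >]].
have i0N : i0 \in N.
  rewrite inE i0S /=; apply/asboolP; exists 0; rewrite addr0 /=.
  by case: (wf i0) => _ /andP[l0 _]; apply/andP; split; rewrite /F; lra.
have ltS' : (#|S :\: N| < m)%N.
  have : (#|S :\: N| < #|S|)%N.
    apply: proper_card; apply/properP; split; first exact: subsetDl.
    by exists i0 => //; rewrite inE i0N.
  move=> h; apply: leq_trans h _; by [].
have [T' [T'S indT' cardT']] := IH (S :\: N) ltS' (fun i hi => HS i (subsetP (subsetDl S N) i hi)).
exists (i0 |: T'); split.
- rewrite subUset sub1set i0S /=; apply: subset_trans T'S (subsetDl _ _).
- have key : forall t, t \in S :\: N -> ~ arcs_intersect (I i0) (I t).
    move=> t /setDP[tS tN] [x [/andP[x0 x1] [hx0 hxt]]].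
    have [st e_t] := lin (wf t) (HS _ tS).
    have := lin_in (ltW s0p) e0 x0 x1 hx0 => /andP[a1 a2].
    have := lin_in (ltW st) e_t x0 x1 hxt => /andP[b1 b2].
    have := Hmin t tS; rewrite /F => c.
    move: tN; rewrite inE tS /= => /negP H; apply: H; apply/asboolP.
    by exists 0; rewrite addr0 /=; apply/andP; split; rewrite /F; lra.
  move=> i j; rewrite !inE => /orP[/eqP->|iT] /orP[/eqP->|jT]; rewrite ?eqxx //.
  + by move=> _; apply: key; apply: (subsetP T'S).
  + by move=> _ h; apply: (key i (subsetP T'S _ iT)); apply: arcs_inter_sym.
  + exact: indT'.
- have i0T' : i0 \notin T'.
    by apply/negP => /(subsetP T'S); rewrite inE i0N.
  rewrite cardsU1 i0T' -(cardsID N S).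
  have -> : S :&: N = N by apply/setIidPr; apply/subsetP => j; rewrite inE => /andP[].
  have cN : (#|N| <= w)%N.
    apply: leq_trans (Hd (F i0) _); last by case: (wf i0) => _ /andP[l0 _]; rewrite /circle_pt /F; apply/andP; split; lra.
    apply: subset_leq_card; apply/subsetP => j; rewrite !inE => /andP[_ ->]; by [].
  rewrite add1n mulnS; exact: leq_add cN cardT'.
Qed.

Lemma indep_le (R : realType) (n : nat) (I : 'I_n -> circ_arc R) (T : {set 'I_n}) :
  independent I T -> (#|T| <= independence_number I)%N.
Proof.
move=> h; rewrite /independence_number.
by apply: (leq_bigmax_cond (F := fun S : {set 'I_n} => #|S|)); apply/asboolP.
Qed.

Lemma sum_depth_le (R : realType) (n : nat) (I : 'I_n -> circ_arc R) (w : nat) :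
  (forall i, wf_arc (I i)) -> (forall x, circle_pt x -> (depth I x <= w)%N) ->
  (\sum_(i < n) \sum_(j < n) (`[< in_arc (I j) (astart (I i)) >] : nat) <= n * w)%N.
Proof.
move=> wf Hd.
have -> : (n * w = \sum_(i < n) w)%N by rewrite sum_nat_const card_ord.
apply: leq_sum => i _; rewrite -card_set_sum; apply: Hd.
by case: (wf i) => /andP[a b] _; rewrite /circle_pt a b.
Qed.

Lemma edges_le (R : realType) (n : nat) (I : 'I_n -> circ_arc R) (w : nat) :
  (forall i, wf_arc (I i)) -> (forall x, circle_pt x -> (depth I x <= w)%N) ->
  (num_edges I <= 2 * n * w)%N.
Proof.
move=> wf Hd.
pose X1 := [set p : 'I_n * 'I_n | `[< in_arc (I p.2) (astart (I p.1)) >]].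
pose X2 := [set p : 'I_n * 'I_n | `[< in_arc (I p.1) (astart (I p.2)) >]].
have sub : [set p : 'I_n * 'I_n | (p.1 < p.2)%N && `[< arcs_intersect (I p.1) (I p.2) >]]
   \subset X1 :|: X2.
  apply/subsetP => p; rewrite !inE => /andP[_ /asboolP h].
  by case: (arcs_inter_start h) => h'; apply/orP; [left|right]; apply/asboolP.
apply: leq_trans (subset_leq_card sub) _.
apply: leq_trans (leq_card_setU _ _) _.
have c1 : (#|X1| <= n * w)%N.
  by rewrite /X1 (card_pairs (fun i j => `[< in_arc (I j) (astart (I i)) >])); apply: sum_depth_le.
have c2 : (#|X2| <= n * w)%N.
  rewrite /X2 (card_pairs (fun i j => `[< in_arc (I i) (astart (I j)) >])) exchange_big /=.
  exact: sum_depth_le.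
by rewrite -mulnA mul2n -addnn; apply: leq_add.
Qed.

Lemma upper (R : realType) (n : nat) (I : 'I_n -> circ_arc R) (alpha omega : nat) :
  (forall i, wf_arc (I i)) -> independence_number I = alpha ->
  is_max_depth I omega -> (num_edges I <= 4 * alpha * omega ^ 2)%N.
Proof.
move=> wf Ha [_ Hd].
have hE := edges_le wf Hd.
pose Z := [set i : 'I_n | `[< in_arc (I i) 0 >]].
have cZ : (#|Z| <= omega)%N by apply: Hd; rewrite /circle_pt lexx ltr01.
have [T [TS indT cT]] := @greedy R n I omega wf Hd (~: Z)
   (fun i hi h => ltac:(move: hi; rewrite !inE => /negP; apply; exact/asboolP)).
have aT : (#|T| <= alpha)%N by rewrite -Ha; apply: indep_le.
have hn : (n <= omega + omega * alpha)%N.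
  rewrite -[n]card_ord -(cardsC Z); apply: leq_add => //.
  apply: leq_trans cT _; exact: leq_mul.
case: (posnP n) => [n0|npos].
  have z : (2 * n * omega = 0)%N by rewrite n0 muln0 mul0n.
  by move: hE; rewrite z leqn0 => /eqP->.
have a1 : (1 <= alpha)%N.
  rewrite -Ha; have := @indep_le R n I [set Ordinal npos] => h.
  apply: leq_trans (h _); first by rewrite cards1.
  by move=> i j; rewrite !inE => /eqP-> /eqP->; rewrite eqxx.
apply: leq_trans hE _.
nia.
Qed.
Definition carc (R : realType) (a w i : nat) : circ_arc R :=
  Arc ((2 * w * (i %/ w))%:R / (2 * a * w)%:R) ((i %% w).+1%:R / (2 * a * w)%:R).

Lemma ler_nu (R : realType) (u : R) (m k : nat) : 0 < u ->
  (m%:R * u <= k%:R * u) = (m <= k)%N.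
Proof. by move=> u0; rewrite ler_pM2r // ler_nat. Qed.

Lemma ltr_nu (R : realType) (u : R) (m k : nat) : 0 < u ->
  (m%:R * u < k%:R * u) = (m < k)%N.
Proof. by move=> u0; rewrite ltr_pM2r // ltr_nat. Qed.

Lemma grp_lt (a w i : nat) : (0 < w)%N -> (i < a * w)%N -> (i %/ w < a)%N.
Proof. by move=> w0 h; rewrite ltn_divLR. Qed.

Lemma end_lt (a w i : nat) : (0 < w)%N -> (i < a * w)%N ->
  (2 * w * (i %/ w) + (i %% w).+1 < 2 * a * w)%N.
Proof.
move=> w0 h; have g := grp_lt w0 h; have k : (i %% w < w)%N by rewrite ltn_mod.
nia.
Qed.


Lemma u_pos (R : realType) (a w : nat) : (0 < a)%N -> (0 < w)%N ->
  0 < ((2 * a * w)%:R : R)^-1.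
Proof. by move=> a0 w0; rewrite invr_gt0 ltr0n; nia. Qed.

Lemma u_one (R : realType) (a w : nat) : (0 < a)%N -> (0 < w)%N ->
  (2 * a * w)%:R * ((2 * a * w)%:R : R)^-1 = 1.
Proof. by move=> a0 w0; rewrite mulfV // pnatr_eq0; nia. Qed.

Lemma carc_end (R : realType) (a w i : nat) :
  astart (carc R a w i) + alen (carc R a w i) =
  (2 * w * (i %/ w) + (i %% w).+1)%:R * ((2 * a * w)%:R)^-1.
Proof. by rewrite /carc /= natrD mulrDl. Qed.

Lemma carc_wf (R : realType) (a w i : nat) : (0 < a)%N -> (0 < w)%N -> (i < a * w)%N ->
  wf_arc (carc R a w i).
Proof.
move=> a0 w0 h; have u0 := u_pos R a0 w0; have u1 := u_one R a0 w0.
have e := end_lt w0 h.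
rewrite /wf_arc /carc /=; split; apply/andP; split.
- by apply: mulr_ge0; [rewrite ler0n | exact: ltW].
- by rewrite -[X in _ < X]u1 ltr_nu //; apply: leq_ltn_trans e; apply: leq_addr.
- by apply: mulr_gt0; rewrite ?ltr0n.
- rewrite -[X in _ < X]u1 ltr_nu //; apply: leq_ltn_trans e; apply: leq_addl.
Qed.

Lemma carc_lin (R : realType) (a w i : nat) (x : R) :
  (0 < a)%N -> (0 < w)%N -> (i < a * w)%N -> 0 <= x -> x < 1 ->
  in_arc (carc R a w i) x ->
  (2 * w * (i %/ w))%:R * ((2 * a * w)%:R)^-1 <= x <=
  (2 * w * (i %/ w) + (i %% w).+1)%:R * ((2 * a * w)%:R)^-1.
Proof.
move=> a0 w0 h x0 x1 hin.
have u0 := u_pos R a0 w0; have u1 := u_one R a0 w0.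
have [/andP[s0 _] _] := carc_wf R a0 w0 h.
have e1 : astart (carc R a w i) + alen (carc R a w i) < 1.
  by rewrite carc_end -[X in _ < X]u1 ltr_nu //; apply: end_lt.
by have := lin_in s0 e1 x0 x1 hin; rewrite carc_end.
Qed.

Lemma carc_at_start (R : realType) (a w i : nat) :
  (0 < a)%N -> (0 < w)%N ->
  in_arc (carc R a w i) ((2 * w * (i %/ w))%:R * ((2 * a * w)%:R)^-1).
Proof.
move=> a0 w0; have u0 := u_pos R a0 w0.
exists 0; rewrite addr0 carc_end lexx /= ler_nu //; exact: leq_addr.
Qed.

Lemma same_grp (R : realType) (a w i j : nat) (x : R) :
  (0 < a)%N -> (0 < w)%N -> (i < a * w)%N -> (j < a * w)%N -> 0 <= x -> x < 1 ->
  in_arc (carc R a w i) x -> in_arc (carc R a w j) x -> (i %/ w = j %/ w)%N.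
Proof.
move=> a0 w0 hi hj x0 x1 ini inj.
have u0 := u_pos R a0 w0.
have /andP[a1 a2] := carc_lin a0 w0 hi x0 x1 ini.
have /andP[b1 b2] := carc_lin a0 w0 hj x0 x1 inj.
have c1 : (2 * w * (i %/ w) <= 2 * w * (j %/ w) + (j %% w).+1)%N.
  by rewrite -(ler_nu _ _ u0); apply: le_trans a1 b2.
have c2 : (2 * w * (j %/ w) <= 2 * w * (i %/ w) + (i %% w).+1)%N.
  by rewrite -(ler_nu _ _ u0); apply: le_trans b1 a2.
have ki : (i %% w < w)%N by rewrite ltn_mod.
have kj : (j %% w < w)%N by rewrite ltn_mod.
nia.
Qed.

Lemma carc_inter (R : realType) (a w i j : nat) :
  (0 < a)%N -> (0 < w)%N -> (i < a * w)%N -> (j < a * w)%N ->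
  arcs_intersect (carc R a w i) (carc R a w j) <-> (i %/ w = j %/ w)%N.
Proof.
move=> a0 w0 hi hj; split.
  by move=> [x [/andP[x0 x1] [h1 h2]]]; apply: (same_grp a0 w0 hi hj x0 x1 h1 h2).
move=> e; exists ((2 * w * (i %/ w))%:R * ((2 * a * w)%:R)^-1); split.
  have u0 := u_pos R a0 w0; have u1 := u_one R a0 w0.
  have [/andP[s0 s1] _] := carc_wf R a0 w0 hi.
  by apply/andP; split.
by split; [|rewrite e]; apply: carc_at_start.
Qed.

Lemma grp_dec (g x w : nat) : (x < w)%N -> ((g * w + x) %/ w = g /\ (g * w + x) %% w = x)%N.
Proof.
move=> h; have w0 : (0 < w)%N by apply: leq_ltn_trans h.
by rewrite divnMDl // divn_small // addn0 modnMDl modn_small.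
Qed.

Lemma ltg (a w g x : nat) : (g < a)%N -> (x < w)%N -> (g * w + x < a * w)%N.
Proof. move=> h1 h2; nia. Qed.

Lemma lt1 (w : nat) (x : 'I_(w./2)) : (x < w)%N.
Proof. have := ltn_ord x; have := odd_double_half w; case: (odd w) => /=; lia. Qed.

Lemma lt2 (w : nat) (y : 'I_(w - w./2)) : (w./2 + y < w)%N.
Proof. have := ltn_ord y; have := odd_double_half w; case: (odd w) => /=; lia. Qed.

Lemma nat_of_u (R : realType) (u : R) (m k : nat) : 0 < u -> m%:R * u = k%:R * u -> m = k.
Proof.
move=> u0 /(mulIf (lt0r_neq0 u0))/eqP; rewrite eqr_nat => /eqP //.
Qed.

Lemma ord_eq (N w : nat) (i j : 'I_N) : (i %/ w = j %/ w)%N -> (i %% w = j %% w)%N -> i = j.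
Proof.
move=> h1 h2; apply: val_inj => /=.
by rewrite (divn_eq i w) (divn_eq j w) h1 h2.
Qed.

Lemma lower (R : realType) (a w : nat) : (0 < a)%N -> (1 < w)%N ->
  exists (n : nat) (I : 'I_n -> circ_arc R),
    injective I /\ (forall i, wf_arc (I i)) /\
    independence_number I = a /\ is_max_depth I w /\
    (a * w ^ 2 <= 6 * num_edges I)%N.
Proof.
move=> a0 w1; have w0 : (0 < w)%N by apply: ltnW.
have u0 := u_pos R a0 w0.
pose I := fun i : 'I_((a * w)%N) => carc R a w i.
have inter : forall i j : 'I_((a * w)%N), arcs_intersect (I i) (I j) <-> (i %/ w = j %/ w)%N.
  by move=> i j; apply: carc_inter.
exists (a * w)%N, I; split; [|split; [|split; [|split]]].
- move=> i j /= e.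
  have e1 : astart (I i) = astart (I j) by rewrite e.
  have e2 : alen (I i) = alen (I j) by rewrite e.
  move: e1 e2; rewrite /I /carc /= => /(nat_of_u u0) h1 /(nat_of_u u0) h2.
  apply: (@ord_eq _ w); last by move: h2 => [].
  by apply/eqP; rewrite -(@eqn_pmul2l (2 * w)) ?h1 //; rewrite muln_gt0 w0.
- by move=> i; apply: carc_wf.
- apply/eqP; rewrite eqn_leq; apply/andP; split.
    apply/bigmax_leqP => S /asboolP indS.
    pose f := fun j : 'I_((a * w)%N) => (Ordinal (grp_lt w0 (ltn_ord j)) : 'I_a).
    rewrite -[X in (_ <= X)%N]card_ord.
    apply: (@leq_card_in _ _ f) => i j iS jS /(congr1 val) /= e.
    apply/eqP; apply/negPn/negP => ne.
    by apply: (indS i j iS jS ne); apply/inter.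
  pose f := fun g : 'I_a => (Ordinal (ltg (ltn_ord g) w0) : 'I_((a * w)%N)).
  have finj : injective f.
    move=> g g' /(congr1 val) /= e; apply: val_inj => /=.
    by move: e; rewrite !addn0 => /eqP; rewrite eqn_pmul2r // => /eqP.
  have ca : #|f @: [set: 'I_a]| = a by rewrite card_imset // cardsT card_ord.
  apply: (@leq_trans #|f @: [set: 'I_a]|); first by rewrite ca.
  apply: indep_le => i j /imsetP[g _ ->] /imsetP[g' _ ->] ne /inter /=.
  rewrite !addn0 !mulnK // => e; move: ne; suff -> : g = g' by rewrite eqxx.
  exact: val_inj.
- have dle : forall x, circle_pt x -> (depth I x <= w)%N.
    move=> x /andP[x0 x1].
    pose f := fun j : 'I_((a * w)%N) => (Ordinal (ltn_pmod j w0) : 'I_w).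
    rewrite /depth -[X in (_ <= X)%N]card_ord.
    apply: (@leq_card_in _ _ f) => i j; rewrite !inE => /asboolP ii /asboolP ij /(congr1 val) /= e.
    apply: (@ord_eq _ w) => //; exact: (same_grp a0 w0 (ltn_ord i) (ltn_ord j) x0 x1 ii ij).
  split => //; exists 0; split; first by rewrite /circle_pt lexx ltr01.
  apply/eqP; rewrite eqn_leq dle ?/circle_pt ?lexx ?ltr01 //=.
  have aw : (w <= a * w)%N by rewrite leq_pmull.
  pose f := fun k : 'I_w => widen_ord aw k.
  have finj : injective f by move=> k k' /(congr1 val) /= e; apply: val_inj.
  rewrite -[X in (X <= _)%N]card_ord -cardsT -(card_imset _ finj).
  apply: subset_leq_card; apply/subsetP => j /imsetP[k _ ->]; rewrite inE.
  apply/asboolP; have := carc_at_start R (f k) a0 w0.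
  by rewrite /= divn_small // muln0 mul0r.
- pose hf := w./2.
  pose h := fun t : 'I_a * ('I_hf * 'I_(w - hf)) =>
    ((Ordinal (ltg (ltn_ord t.1) (lt1 t.2.1)) : 'I_((a * w)%N)),
     (Ordinal (ltg (ltn_ord t.1) (lt2 t.2.2)) : 'I_((a * w)%N))).
  have hinj : injective h.
    move=> [g [x y]] [g' [x' y']] /= [e1 e2].
    have [d1 m1] := grp_dec g (lt1 x); have [d1' m1'] := grp_dec g' (lt1 x').
    have [d2 m2] := grp_dec g (lt2 y); have [d2' m2'] := grp_dec g' (lt2 y').
    have eg : g = g' by apply: val_inj; rewrite /= -d1 -d1' e1.
    have ex : x = x' by apply: val_inj; rewrite /= -m1 -m1' e1.
    have ey : y = y'.
      apply: val_inj => /=; apply/eqP; rewrite -(eqn_add2l hf) -m2 -m2' e2 -eg //.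
    by rewrite eg ex ey.
  have sub : h @: setT \subset
      [set p : 'I_((a * w)%N) * 'I_((a * w)%N) | (p.1 < p.2)%N && `[< arcs_intersect (I p.1) (I p.2) >]].
    apply/subsetP => p /imsetP[[g [x y]] _ ->]; rewrite inE /=.
    apply/andP; split.
      rewrite ltn_add2l; apply: (leq_trans (ltn_ord x)); exact: leq_addr.
    apply/asboolP; apply/inter => /=.
    by have [-> _] := grp_dec g (lt1 x); have [-> _] := grp_dec g (lt2 y).
  have := subset_leq_card sub; rewrite card_imset // cardsT !card_prod !card_ord => hc.
  apply: leq_trans (leq_mul (leqnn 6) hc).
  have key : (w ^ 2 <= 6 * (hf * (w - hf)))%N.
    have := odd_double_half w; rewrite -/hf.
    case: (odd w) => /= e; rewrite -e; rewrite -addnn; nia.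
  by rewrite mulnCA leq_mul2l key orbT.
Qed.

Theorem lemma2p4 :
  (* upper bound: |E| = O(alpha * omega^2) *)
  (exists C : nat, forall (R : realType) (n : nat) (I : 'I_n -> circ_arc R)
      (alpha omega : nat),
      (forall i, wf_arc (I i)) ->
      independence_number I = alpha ->
      is_max_depth I omega ->
      (num_edges I <= C * alpha * omega ^ 2)%N)
  /\
  (* tightness: families with Omega(alpha * omega^2) edges *)
  (exists c : nat, (0 < c)%N /\
     forall (R : realType) (alpha omega : nat), (0 < alpha)%N -> (1 < omega)%N ->
       exists (n : nat) (I : 'I_n -> circ_arc R),
         injective I /\ (forall i, wf_arc (I i)) /\
         independence_number I = alpha /\ is_max_depth I omega /\
         (alpha * omega ^ 2 <= c * num_edges I)%N).
Proof.
split; first by exists 4 => R n I alpha omega; apply: upper.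
by exists 6; split => // R alpha omega; apply: lower.
Qed.
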